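(* Let $(R,\mathfrak m,k)$ be a one-dimensional analytically irreducible local domain with canonical map $k\to\overline R/\mathfrak n$ an isomorphism, and suppose $R$ is not a discrete valuation ring. Let $S=\mathfrak m:\mathfrak m$, $\mathfrak c=R:\overline R$ the conductor of $R$, and $\mathfrak c_S=S:\overline S$ the conductor of $S$. Then $\ell_S(S/\mathfrak c_S)<\ell_R(R/\mathfrak c)$. Furthermore, $\ell_S(S/\mathfrak c_S)=\ell_R(R/\mathfrak c)-1$ if and only if $R$ has minimal multiplicity.
   Context: $\overline R$ is the integral closure of $R$ in $Q(R)$, assumed finitely generated over $R$ and local with maximal ideal $\mathfrak n$; $\overline S$ is the integral closure of $S$ (equal to $\overline R$). Colons are taken in $Q(R)$. $R$ has minimal multiplicity if $\mathfrak m^2=q\mathfrak m$ for a (any) minimal reduction $(q)$ of $\mathfrak m$. *)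

(* Defs.v *)
(* All rings/modules live inside a fixed field K,
   which plays the role of the quotient field Q(R). Subsets of K are
   Prop-valued predicates K -> Prop. *)
From mathcomp Require Import all_boot all_algebra.
Set Implicit Arguments. Unset Strict Implicit. Unset Printing Implicit Defensive.
Import GRing.Theory.
Local Open Scope ring_scope.

Section Defs.
Variable K : fieldType.
Definition kset := K -> Prop.

Definition incl (A B : kset) := forall x, A x -> B x.
Definition seteq (A B : kset) := forall x, A x <-> B x.

Definition subring (A : kset) :=
  [/\ A 1, forall x y, A x -> A y -> A (x - y) & forall x y, A x -> A y -> A (x * y)].

Definition frac_field_of (A : kset) :=
  forall x : K, exists a b, [/\ A a, A b, b != 0 & x = a / b].

Definition submod (A M : kset) :=
  [/\ M 0, forall x y, M x -> M y -> M (x + y) & forall a x, A a -> M x -> M (a * x)].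

Definition ideal (A I : kset) := submod A I /\ incl I A.

Definition fin_gen (A M : kset) :=
  exists gs : seq K, (forall g, g \in gs -> M g) /\
    forall x, M x -> exists cs : seq K, [/\ size cs = size gs, forall c, c \in cs -> A c
        & x = \sum_(i < size gs) cs`_i * gs`_i].

Definition noetherian (A : kset) := forall I, ideal A I -> fin_gen A I.

Definition principal (A : kset) (q : K) : kset := fun x => exists r, A r /\ x = r * q.

Definition unitIn (A : kset) (x : K) := [/\ A x, x != 0 & A x^-1].

(* the set of non-units of A (the maximal ideal when A is local) *)
Definition maxid (A : kset) : kset := fun x => A x /\ ~ unitIn A x.

Definition local (A : kset) :=
  forall x y, maxid A x -> maxid A y -> maxid A (x + y).

Definition prime_ideal (A P : kset) :=
  [/\ ideal A P, ~ P 1 & forall x y, A x -> A y -> P (x * y) -> P x \/ P y].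

(* Krull dimension one (for a local domain): not a field, and every
   nonzero prime ideal is the maximal ideal *)
Definition dim_one (A : kset) :=
  (exists x, maxid A x /\ x != 0) /\
  forall P, prime_ideal A P -> (exists x, P x /\ x != 0) -> incl (maxid A) P.

Definition intclos (A : kset) : kset := fun x =>
  exists p : {poly K}, [/\ p \is monic, forall i, A p`_i & root p x].

Definition colon (M N : kset) : kset := fun x => forall y, N y -> M (x * y).

Definition mulS (M N : kset) : kset := fun x =>
  exists s : seq (K * K), (forall p, p \in s -> M p.1 /\ N p.2) /\
     x = \sum_(p <- s) p.1 * p.2.

Fixpoint powS (A I : kset) (n : nat) : kset :=
  match n with 0 => A | n'.+1 => mulS I (powS A I n') end.

Definition reduction (A J I : kset) :=
  [/\ ideal A J, incl J I & exists n, seteq (mulS J (powS A I n)) (powS A I n.+1)].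

Definition minimal_reduction (A J I : kset) :=
  reduction A J I /\ forall J', reduction A J' I -> incl J' J -> seteq J' J.

Definition minimal_multiplicity (A : kset) :=
  exists q, minimal_reduction A (principal A q) (maxid A) /\
    seteq (mulS (maxid A) (maxid A)) (mulS (principal A q) (maxid A)).

Definition is_DVR (A : kset) :=
  [/\ local A, exists x, maxid A x /\ x != 0
    & forall I, ideal A I -> exists g, A g /\ seteq I (principal A g)].

(* canonical map k -> Rbar/n is an isomorphism (surjectivity; injectivity
   is automatic) *)
Definition residue_iso (A : kset) :=
  forall x, intclos A x -> exists r, A r /\ maxid (intclos A) (x - r).

Definition strict_chain (A : kset) (C : nat -> kset) (n : nat) (N M : kset) :=
  [/\ forall i, (i <= n)%N -> submod A (C i), seteq (C 0%N) N, seteq (C n) M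
    & forall i, (i < n)%N -> incl (C i) (C i.+1) /\ ~ incl (C i.+1) (C i)].

Definition has_length (A N M : kset) (n : nat) :=
  [/\ submod A N, submod A M, incl N M,
      exists C, strict_chain A C n N M
    & forall C k, strict_chain A C k N M -> (k <= n)%N].

End Defs.

(* Main.v *)
From HB Require Import structures.
Require Import Defs.
From mathcomp Require Import all_boot all_algebra.
From mathcomp Require Import boolp ring.
Set Implicit Arguments. Unset Strict Implicit. Unset Printing Implicit Defensive.
Import GRing.Theory.
Local Open Scope ring_scope.

Section Gen.
Variable K : fieldType.
Implicit Types A M N : kset K.

Lemma sr1 A : subring A -> A 1. Proof. by case. Qed.
Lemma srB A x y : subring A -> A x -> A y -> A (x - y). Proof. by case=> _ H _; apply: H. Qed.
Lemma srM A x y : subring A -> A x -> A y -> A (x * y). Proof. by case=> _ _ H; apply: H. Qed.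
Lemma sr0 A : subring A -> A 0.
Proof. by move=> sA; rewrite -(subrr 1); apply: srB (sr1 sA) (sr1 sA). Qed.
Lemma srN A x : subring A -> A x -> A (- x).
Proof. by move=> sA Ax; rewrite -sub0r; apply: srB (sr0 sA) Ax. Qed.
Lemma srD A x y : subring A -> A x -> A y -> A (x + y).
Proof. by move=> sA Ax Ay; rewrite -[y]opprK; apply: srB Ax (srN sA Ay). Qed.
Lemma srX A x k : subring A -> A x -> A (x ^+ k).
Proof. by move=> sA Ax; elim: k => [|k IH]; [rewrite expr0; apply: sr1 | rewrite exprS; apply: srM]. Qed.
Lemma sr_sum A (I : Type) (r : seq I) (P : pred I) (F : I -> K) :
  subring A -> (forall i, P i -> A (F i)) -> A (\sum_(i <- r | P i) F i).
Proof. by move=> sA HF; apply: big_ind => //; [apply: sr0 | move=> x y; apply: srD]. Qed.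

Lemma sm0 A M : submod A M -> M 0. Proof. by case. Qed.
Lemma smD A M x y : submod A M -> M x -> M y -> M (x + y). Proof. by case=> _ H _; apply: H. Qed.
Lemma smM A M a x : submod A M -> A a -> M x -> M (a * x). Proof. by case=> _ _ H; apply: H. Qed.
Lemma smN A M x : subring A -> submod A M -> M x -> M (- x).
Proof. by move=> sA sM Mx; rewrite -mulN1r; apply: smM sM (srN sA (sr1 sA)) Mx. Qed.
Lemma smB A M x y : subring A -> submod A M -> M x -> M y -> M (x - y).
Proof. by move=> sA sM Mx My; apply: smD sM Mx (smN sA sM My). Qed.
Lemma sm_sum A M (I : Type) (r : seq I) (P : pred I) (F : I -> K) :
  submod A M -> (forall i, P i -> M (F i)) -> M (\sum_(i <- r | P i) F i).
Proof. by move=> sM HF; apply: big_ind => //; [apply: sm0 sM | move=> x y; apply: smD sM]. Qed.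
Lemma sm_sub A B M : incl B A -> submod A M -> submod B M.
Proof. by move=> BA [H0 HD HM]; split=> // a x Ba; apply: HM; apply: BA. Qed.

End Gen.

Section Main.
Variable K : fieldType.
Variable R : K -> Prop.
Hypothesis sR : subring R.

Definition Rp : {pred K} := fun x => `[< R x >].
Lemma Rp_subring : subring_closed Rp.
Proof.
split; rewrite /Rp /in_mem /=.
- exact/asboolT/(sr1 sR).
- by move=> x y /asboolP Hx /asboolP Hy; apply: asboolT; apply: srB.
- by move=> x y /asboolP Hx /asboolP Hy; apply: asboolT; apply: srM.
Qed.
HB.instance Definition _ := GRing.isSubringClosed.Build K Rp Rp_subring.
Record Rt := RT { rval : K; rvalP : rval \in Rp }.
HB.instance Definition _ := [isSub for rval].
HB.instance Definition _ := [Choice of Rt by <:].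
HB.instance Definition _ := [SubChoice_isSubComNzRing of Rt by <:].

Lemma RpE x : (x \in Rp) <-> R x.
Proof. by rewrite /Rp /in_mem /=; split=> /asboolP. Qed.

Lemma R_val (u : Rt) : R (val u).
Proof. by apply/RpE; apply: valP. Qed.

Local Notation Rb := (intclos R).
Local Notation vR := (val : {rmorphism Rt -> K}).

Lemma intclosE x : Rb x <-> integralOver vR x.
Proof.
split.
- case=> p [mp Rc rp].
  pose q : {poly Rt} := \poly_(i < size p) insubd (0 : Rt) p`_i.
  have qp : map_poly vR q = p.
    apply/polyP=> i; rewrite coef_map coef_poly /=.
    case: ltnP => Hi; first by rewrite insubdK //; apply/RpE.
    by rewrite nth_default.
  exists q => //.
  rewrite monicE; apply/eqP/val_inj => /=.
  have := lead_coef_map_inj (@val_inj _ _ Rt) (rmorph0 vR) q.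
  by rewrite qp => <-; rewrite (eqP mp).
  by rewrite qp.
- case=> q mq rq; exists (map_poly vR q); split => //.
  + exact: monic_map.
  + by move=> i; rewrite coef_map; apply: R_val.
Qed.

Lemma Rb_R x : R x -> Rb x.
Proof.
move=> Rx; apply/intclosE.
have -> : x = vR (insubd (0 : Rt) x) by rewrite /= insubdK //; apply/RpE.
exact: integral_id.
Qed.

Lemma subring_Rb : subring Rb.
Proof.
split.
- exact/Rb_R/(sr1 sR).
- by move=> x y /intclosE Hx /intclosE Hy; apply/intclosE; apply: integral_sub.
- by move=> x y /intclosE Hx /intclosE Hy; apply/intclosE; apply: integral_mul.
Qed.

Lemma Rb_closed (p : {poly K}) x :
  p \is monic -> (forall i, Rb p`_i) -> root p x -> Rb x.
Proof.
move=> mp Hc rp; apply/intclosE; apply: (integral_root_monic mp rp).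
move=> z /(nthP 0) [i _ <-]; exact/intclosE/Hc.
Qed.

Lemma Rb_poly (p : {poly Rt}) x : p \is monic -> root (map_poly vR p) x -> Rb x.
Proof. by move=> mp rp; apply/intclosE; exists p. Qed.

Lemma det_trick (gs : seq K) (z : K) :
  (exists2 g, g \in gs & g != 0) ->
  (forall i, (i < size gs)%N -> exists cs : seq K,
      [/\ size cs = size gs, forall c, c \in cs -> R c
        & z * gs`_i = \sum_(j < size gs) cs`_j * gs`_j]) ->
  Rb z.
Proof.
move=> [g gin gnz] Hc.
pose n := size gs.
have Hc' : forall i : 'I_n, exists cs : seq K,
   [/\ size cs = size gs, forall c, c \in cs -> R c
        & z * gs`_i = \sum_(j < size gs) cs`_j * gs`_j].
  by move=> i; apply: Hc.
have [f Hf] := choice Hc'.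
pose B : 'M[Rt]_n := \matrix_(j, i) insubd (0 : Rt) (f i)`_j.
pose vg : 'rV[K]_n := \row_i gs`_i.
have Bv : vg *m map_mx vR B = z *: vg.
  apply/rowP=> i; rewrite !mxE; have [_ _ ->] := Hf i.
  apply: eq_bigr => j _; rewrite !mxE /= insubdK; first by rewrite mulrC.
  apply/RpE; have [sz Rc _] := Hf i.
  have [lt|ge] := ltnP j (size (f i)); first by apply: Rc; apply: mem_nth.
  by rewrite nth_default //; apply: sr0.
have vnz : vg != 0.
  apply/eqP => /rowP H; move: gin => /(nthP 0) [i ilt gi].
  by move: (H (Ordinal ilt)); rewrite !mxE /= gi => /eqP; rewrite (negPf gnz).
have : eigenvalue (map_mx vR B) z by apply/eigenvalueP; exists vg.
rewrite eigenvalue_root_char -map_char_poly => rz.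
exact: (Rb_poly (char_poly_monic B) rz).
Qed.


Hypothesis hfrac : frac_field_of R.
Hypothesis hnoeth : noetherian R.
Hypothesis hloc : local R.
Hypothesis hdim : dim_one R.
Hypothesis hfin : fin_gen R (intclos R).
Hypothesis hlocb : local (intclos R).
Hypothesis hres : residue_iso R.

Local Notation nb := (maxid Rb).
Local Notation m := (maxid R).

Lemma srRb : subring Rb. Proof. exact: subring_Rb. Qed.

Lemma unit_not_maxid (A : kset K) x : unitIn A x -> ~ maxid A x.
Proof. by move=> u [_ h]. Qed.

Lemma notmax_unit (A : kset K) x : A x -> ~ maxid A x -> unitIn A x.
Proof. by move=> Ax H; case: (pselect (unitIn A x)) => // nu; exfalso; apply: H. Qed.

Lemma maxid_mul (A : kset K) a y : subring A -> A a -> maxid A y -> maxid A (a * y).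
Proof.
move=> sA Aa [Ay nu]; split; first exact: srM.
case=> _ nz inv; apply: nu; split => //.
- by apply/eqP => y0; move: nz; rewrite y0 mulr0 eqxx.
- have anz : a != 0 by apply/eqP => a0; move: nz; rewrite a0 mul0r eqxx.
  have ynz : y != 0 by apply/eqP => y0; move: nz; rewrite y0 mulr0 eqxx.
  have -> : y^-1 = a * (a * y)^-1 by field; apply/andP.
  exact: srM.
Qed.

Lemma unit1 (A : kset K) : subring A -> unitIn A 1.
Proof. by move=> sA; split; rewrite ?invr1; [apply: sr1 | apply: oner_neq0 | apply: sr1]. Qed.

Lemma maxid0 (A : kset K) : subring A -> maxid A 0.
Proof. by move=> sA; split; [apply: sr0 | case=> _; rewrite eqxx]. Qed.

Lemma maxidN (A : kset K) x : subring A -> maxid A x -> maxid A (- x).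
Proof. by move=> sA mx; rewrite -mulN1r; apply: maxid_mul => //; apply: srN => //; apply: sr1. Qed.

Lemma maxidB (A : kset K) x y : subring A -> local A -> maxid A x -> maxid A y -> maxid A (x - y).
Proof. by move=> sA lA mx my; apply: lA => //; apply: maxidN. Qed.

Lemma ideal_maxid (A : kset K) : subring A -> local A -> ideal A (maxid A).
Proof.
move=> sA lA; split; last by move=> x [].
split; [exact: maxid0 | exact: lA | move=> a x Aa mx; exact: maxid_mul].
Qed.

Lemma unit_R_Rb x : unitIn R x -> unitIn Rb x.
Proof. by case=> Rx nz Ri; split => //; apply: Rb_R. Qed.

Lemma m_nb x : m x -> nb x.
Proof.
move=> [Rx nu]; split; first exact: Rb_R.
case=> _ xnz Rbi.
case: (hres Rbi) => s [Rs ns].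
have h1 : nb (1 - x * s).
  have -> : 1 - x * s = x * (x^-1 - s) by field.
  by apply: maxid_mul => //; [exact: srRb | exact: Rb_R].
have h2 : m (x * s) by rewrite mulrC; apply: maxid_mul.
case: (pselect (unitIn R (1 - x * s))) => u.
  by apply: (unit_not_maxid (unit_R_Rb u)).
have h3 : m (1 - x * s) by split => //; apply: srB => //; [exact: sr1 | exact: srM].
have : m (x * s + (1 - x * s)) by apply: hloc.
rewrite addrC subrK; apply: unit_not_maxid; exact: unit1.
Qed.

Lemma nb_m x : R x -> nb x -> m x.
Proof. by move=> Rx [_ nu]; split => // u; apply: nu; apply: unit_R_Rb. Qed.

Lemma Rb_ideal_nb : ideal Rb nb.
Proof. exact: ideal_maxid srRb hlocb. Qed.

Lemma cond_ex : exists d, [/\ R d, d != 0 & forall y, Rb y -> R (d * y)].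
Proof.
case: hfin => gs [gin grep].
have H : forall s : seq K, exists d, [/\ R d, d != 0 & forall g, g \in s -> R (d * g)].
  elim=> [|g s [d [Rd dnz Hd]]].
    by exists 1; split; [exact: sr1 | exact: oner_neq0 | done].
  case: (hfrac g) => a [b [Ra Rbb bnz ->]].
  exists (d * b); split; [exact: srM | exact: mulf_neq0 | ].
  move=> h; rewrite inE => /orP [/eqP -> | hs].
    have -> : d * b * (a / b) = d * a by field.
    exact: srM.
  by rewrite mulrAC; apply: srM => //; apply: Hd.
case: (H gs) => d [Rd dnz Hd]; exists d; split => // y /grep [cs [sz Rc ->]].
rewrite mulr_sumr; apply: sr_sum => // i _.
rewrite mulrCA; apply: srM => //.
  by apply: Rc; apply: mem_nth; rewrite sz.
by apply: Hd; apply: mem_nth.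
Qed.

Definition d := proj1_sig (cid cond_ex).
Lemma dP : [/\ R d, d != 0 & forall y, Rb y -> R (d * y)].
Proof. exact: (proj2_sig (cid cond_ex)). Qed.
Lemma Rd : R d. Proof. by case: dP. Qed.
Lemma dnz : d != 0. Proof. by case: dP. Qed.
Lemma dRb y : Rb y -> R (d * y). Proof. by case: dP => _ _; apply. Qed.

Lemma det_ideal (N : kset K) z : ideal R N -> (exists y, N y /\ y != 0) ->
  (forall y, N y -> N (z * y)) -> Rb z.
Proof.
move=> iN [y [Ny ynz]] Hz; case: (hnoeth iN) => gs [gin grep].
apply: (@det_trick gs).
- apply: contrapT => H; case: (grep y Ny) => cs [_ _ yE].
  apply/negP: ynz; apply/negPn/eqP; rewrite yE big1 // => i _.
  have : gs`_i == 0.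
    apply/negPn/negP => nz; apply: H; exists gs`_i => //; exact: mem_nth.
  by move/eqP ->; rewrite mulr0.
- move=> i lti; case: (grep _ (Hz _ (gin _ (mem_nth 0 lti)))) => cs [sz Rc E].
  by exists cs.
Qed.

Definition dscale (M : kset K) : kset K := fun y => exists u, M u /\ y = d * u.

Lemma dscale_ideal (M : kset K) : submod R M -> incl M Rb -> ideal R (dscale M).
Proof.
move=> sM MRb; split.
- split.
  + by exists 0; split; [exact: sm0 sM | rewrite mulr0].
  + move=> x y [u [Mu ->]] [w [Mw ->]]; exists (u + w); split; last by rewrite mulrDr.
    exact: smD sM Mu Mw.
  + move=> a x Ra [u [Mu ->]]; exists (a * u); split; last by rewrite mulrCA.
    exact: smM sM Ra Mu.
- by move=> x [u [Mu ->]]; apply: dRb; apply: MRb.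
Qed.

Lemma det_mod (M : kset K) z : submod R M -> incl M Rb -> (exists y, M y /\ y != 0) ->
  (forall y, M y -> M (z * y)) -> Rb z.
Proof.
move=> sM MRb [y [My ynz]] Hz; apply: (det_ideal (dscale_ideal sM MRb)).
  by exists (d * y); split; [exists y | apply: mulf_neq0 => //; exact: dnz].
by move=> x [u [Mu ->]]; exists (z * u); split; [apply: Hz | rewrite mulrCA].
Qed.

Lemma acc_Rb (M : nat -> kset K) : (forall i, submod R (M i)) ->
  (forall i, incl (M i) Rb) -> (forall i, incl (M i) (M i.+1)) ->
  exists k, incl (M k.+1) (M k).
Proof.
move=> sM MRb Hinc.
have mono : forall i j, (i <= j)%N -> incl (M i) (M j).
  move=> i j /subnK <-; elim: (j - i)%N => //= k IH y My.
  by rewrite addSn; apply: Hinc; apply: IH.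
pose U := fun y => exists i, M i y.
have sU : submod R U.
  split.
  - by exists 0%N; apply: sm0 (sM 0%N).
  - move=> x y [i Mi] [j Mj]; exists (maxn i j); apply: smD (sM _) _ _.
    + exact: mono (leq_maxl i j) _ Mi.
    + exact: mono (leq_maxr i j) _ Mj.
  - by move=> a x Ra [i Mi]; exists i; apply: smM (sM i) Ra Mi.
have URb : incl U Rb by move=> y [i Mi]; apply: (MRb i).
case: (hnoeth (dscale_ideal sU URb)) => gs [gin grep].
have [k Hk] : exists k, forall g, g \in gs -> M k (g / d).
  elim: gs {grep} gin => [|g s IH] Hs; first by exists 0%N.
  case: IH => [g' h|k Hk]; first by apply: Hs; rewrite inE h orbT.
  case: (Hs g (mem_head g s)) => u [[i Mi] ->].
  exists (maxn k i) => g'; rewrite inE => /orP [/eqP -> | h].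
    have -> : d * u / d = u by field; exact: dnz.
    exact: mono (leq_maxr k i) _ Mi.
  exact: mono (leq_maxl k i) _ (Hk g' h).
exists k => y My.
have : dscale U (d * y) by exists y; split => //; exists k.+1.
case/grep => cs [sz Rc E].
have -> : y = \sum_(i < size gs) cs`_i * (gs`_i / d).
  apply: (mulfI dnz); rewrite E mulr_sumr; apply: eq_bigr => i _.
  by field; exact: dnz.
apply: sm_sum (sM k) _ => i _; apply: smM (sM k) _ (Hk _ (mem_nth 0 (ltn_ord i))).
by apply: Rc; apply: mem_nth; rewrite sz.
Qed.

Lemma horner_Rb (q : {poly K}) y : (forall i, R q`_i) -> Rb y -> Rb q.[y].
Proof.
move=> Rq Ry; rewrite horner_coef; apply: sr_sum srRb _ => i _.
by apply: srM srRb (Rb_R (Rq i)) (srX _ srRb Ry).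
Qed.

Lemma nb_nonzero : exists a, nb a /\ a != 0.
Proof. by case: hdim => [[x [mx xnz]] _]; exists x; split => //; exact: m_nb. Qed.

Lemma unif_ex : exists t, [/\ nb t, t != 0 & forall z, nb z -> exists u, Rb u /\ z = t * u].
Proof.
case: nb_nonzero => a [na anz].
have Rba : Rb a by case: na.
pose aR := fun y => exists w, Rb w /\ y = a * w.
pose Ann := fun b z => Rb z /\ aR (z * b).
pose Bi := fun b => Rb b /\ ~ aR b.
have sAnn : forall b, submod R (Ann b).
  move=> b; split.
  - split; [exact: sr0 srRb | exists 0; split; [exact: sr0 srRb | by rewrite mul0r mulr0]].
  - move=> x y [Rx [w1 [Rw1 E1]]] [Ry [w2 [Rw2 E2]]]; split; first exact: srD srRb Rx Ry.
    exists (w1 + w2); split; [exact: srD srRb Rw1 Rw2 | by rewrite mulrDl E1 E2 mulrDr].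
  - move=> r x Rr [Rx [w [Rw E]]]; split; first by apply: srM srRb (Rb_R Rr) Rx.
    exists (r * w); split; [exact: srM srRb (Rb_R Rr) Rw | by rewrite -mulrA E mulrCA].
have AnnRb : forall b, incl (Ann b) Rb by move=> b z [].
have B1 : Bi 1.
  split; first exact: sr1 srRb.
  case=> w [Rw E]; apply: (unit_not_maxid _ na); split => //.
  have -> : a^-1 = w by apply: (mulfI anz); rewrite -E mulfV.
  done.
have [b [Bb bmax]] : exists b, Bi b /\
    forall b', Bi b' -> incl (Ann b) (Ann b') -> incl (Ann b') (Ann b).
  apply: contrapT => H.
  have H' : forall b, exists b', Bi b ->
      [/\ Bi b', incl (Ann b) (Ann b') & ~ incl (Ann b') (Ann b)].
    move=> b; case: (pselect (Bi b)) => Bb; last by exists b.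
    apply: contrapT => H2; apply: H; exists b; split => // b' Bb' I1.
    by apply: contrapT => I2; apply: H2; exists b' => _; split.
  case: (choice H') => f Hf.
  pose s k := iter k f 1.
  have Bs : forall k, Bi (s k) by elim => //= k IH; case: (Hf _ IH).
  have Hinc : forall k, incl (Ann (s k)) (Ann (s k.+1)) by move=> k; case: (Hf _ (Bs k)).
  have [k Hk] := @acc_Rb (fun k => Ann (s k)) (fun k => sAnn _) (fun k => AnnRb _) Hinc.
  by case: (Hf _ (Bs k)) => _ _; apply.
have Rbb : Rb b by case: Bb.
have bnz : b != 0.
  by apply/eqP => b0; case: Bb => _; apply; exists 0; split; [exact: sr0 srRb | rewrite b0 mulr0].
pose P := Ann b.
have Pprime : forall x y, Rb x -> Rb y -> P (x * y) -> ~ P x -> P y.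
  move=> x y Rx Ry [_ Pxy] nPx.
  have Bxb : Bi (x * b).
    split; first exact: srM srRb Rx Rbb.
    by move=> H; apply: nPx; split.
  have I1 : incl (Ann b) (Ann (x * b)).
    move=> z [Rz [w [Rw E]]]; split => //; exists (x * w); split; first exact: srM srRb Rx Rw.
    by rewrite mulrCA E mulrCA.
  apply: (bmax _ Bxb I1); split => //.
  by rewrite mulrA (mulrC y x).
have Pnb : incl P nb.
  move=> z [Rz Hz]; split => // u; case: Bb => _; apply.
  case: u => _ znz Rzi; case: Hz => w [Rw E].
  exists (z^-1 * w); split; first exact: srM srRb Rzi Rw.
  by rewrite mulrCA -E mulrA mulVf // mul1r.
have mP : incl m P.
  pose Q := fun r => R r /\ P r.
  have pQ : prime_ideal R Q.
    split.
    - split; last by move=> x [].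
      split.
      + split; [exact: sr0 | exact: (sm0 (sAnn b))].
      + move=> x y [Rx Px] [Ry Py]; split; [exact: srD | exact: (smD (sAnn b))].
      + move=> r x Rr [Rx Px]; split; [exact: srM | exact: (smM (sAnn b))].
    - by case=> _ [_]; rewrite mul1r => H; case: Bb => _; apply.
    - move=> x y Rx Ry [_ Pxy]; case: (pselect (P x)) => Px; first by left.
      right; split => //; apply: Pprime Pxy Px; exact: Rb_R.
  case: hdim => _ /(_ Q pQ) H.
  have HQ : incl m Q.
    apply: H; exists (d * a); split; last by apply: mulf_neq0 => //; exact: dnz.
    split; first exact: dRb.
    split; first exact: srM srRb (Rb_R Rd) Rba.
    exists (d * b); split; first exact: srM srRb (Rb_R Rd) Rbb.
    by ring.
  by move=> x /HQ [].
have nbP : incl nb P.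
  move=> y ny; apply: contrapT => nPy.
  have Rby : Rb y by case: ny.
  case: (Rby) => p [mp Rc rp].
  have key : forall q : {poly K}, (forall i, R q`_i) -> P q.[y] -> forall i, m q`_i.
    elim/poly_ind => [_ _ i|q c IH Rq Pq i]; first by rewrite coef0; exact: maxid0 sR.
    have Rc0 : R c by have := Rq 0%N; rewrite -cons_poly_def coef_cons.
    have Rqi : forall i, R q`_i by move=> j; have := Rq j.+1; rewrite -cons_poly_def coef_cons.
    have Rbqy : Rb q.[y] := horner_Rb Rqi Rby.
    rewrite hornerMXaddC in Pq.
    have mc : m c.
      apply: nb_m Rc0 _.
      have -> : c = (q.[y] * y + c) - q.[y] * y by rewrite addrC addKr.
      apply: maxidB srRb hlocb (Pnb _ Pq) _.
      by apply: maxid_mul srRb Rbqy ny.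
    have Pqy : P (q.[y] * y).
      have -> : q.[y] * y = (q.[y] * y + c) - c by rewrite addrK.
      exact: (smB sR (sAnn b)) Pq (mP _ mc).
    have Pq' : P q.[y] by apply: (Pprime y q.[y]) => //; rewrite mulrC.
    rewrite -cons_poly_def coef_cons; case: eqP => _; [exact: mc | exact: IH].
  have := key p Rc _ (size p).-1.
  rewrite -lead_coefE (eqP mp) => H; apply: (unit_not_maxid (unit1 sR)); apply: H.
  by rewrite (eqP rp); exact: (sm0 (sAnn b)).
have ab : forall y, nb y -> Rb (b / a * y).
  move=> y /nbP [_ [w [Rw E]]].
  have -> : b / a * y = w by apply: (mulfI anz); rewrite -E; field.
  done.
have [y [ny nny]] : exists y, nb y /\ ~ nb (b / a * y).
  apply: contrapT => H.
  have Hall : forall y, nb y -> nb (b / a * y).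
    by move=> y ny; apply: contrapT => h; apply: H; exists y.
  have : Rb (b / a).
    apply: (@det_mod nb).
    - by apply: sm_sub Rb_R _; case: Rb_ideal_nb.
    - by move=> z [].
    - by exists a.
    - exact: Hall.
  move=> Rba'; case: Bb => _; apply; exists (b / a); split => //; field; exact: anz.
set w := b / a * y.
have uw : unitIn Rb w := notmax_unit (ab _ ny) nny.
have wnz : w != 0 by case: uw.
have ynz : y != 0 by apply/eqP => y0; move: wnz; rewrite /w y0 mulr0 eqxx.
exists (a / b); split.
- have -> : a / b = w^-1 * y by rewrite /w; field; rewrite anz bnz ynz.
  by apply: maxid_mul srRb _ ny; case: uw.
- by apply: mulf_neq0 => //; rewrite invr_eq0.
- move=> z nz; exists (b / a * z); split; [exact: ab | field].
  by rewrite anz bnz.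
Qed.

Definition t := proj1_sig (cid unif_ex).
Lemma tP : [/\ nb t, t != 0 & forall z, nb z -> exists u, Rb u /\ z = t * u].
Proof. exact: (proj2_sig (cid unif_ex)). Qed.
Lemma tnb : nb t. Proof. by case: tP. Qed.
Lemma tnz : t != 0. Proof. by case: tP. Qed.
Lemma Rbt : Rb t. Proof. by case: tnb. Qed.
Lemma nbE z : nb z -> exists u, Rb u /\ z = t * u. Proof. by case: tP => _ _; apply. Qed.
Lemma tXnz k : t ^+ k != 0. Proof. exact: expf_neq0 tnz. Qed.
Lemma t_inv_notRb : ~ Rb t^-1.
Proof. by move=> H; apply: (unit_not_maxid _ tnb); split => //; [exact: Rbt | exact: tnz]. Qed.
Lemma tmul_nb u : Rb u -> nb (t * u).
Proof. by move=> Ru; rewrite mulrC; apply: maxid_mul srRb Ru tnb. Qed.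

Lemma fin_div y : Rb y -> y != 0 -> exists k, ~ Rb (y / t ^+ k).
Proof.
move=> Ry ynz; apply: contrapT => H.
have Hall : forall k, Rb (y / t ^+ k) by move=> k; apply: contrapT => h; apply: H; exists k.
pose M := fun z => exists k w, Rb w /\ z = y / t ^+ k * w.
apply: t_inv_notRb; apply: (@det_mod M).
- split.
  + by exists 0%N, 0; split; [exact: sr0 srRb | rewrite mulr0].
  + move=> x z [k [w1 [R1 ->]]] [j [w2 [R2 ->]]].
    exists (k + j)%N, (w1 * t ^+ j + w2 * t ^+ k); split.
      by apply: srD srRb _ _; apply: srM srRb _ (srX _ srRb Rbt).
    have := tXnz k; have := tXnz j; rewrite exprD => hj hk; field.
    by rewrite hj hk.
  + move=> r x Rr [k [w [Rw ->]]]; exists k, (r * w); split; last by ring.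
    exact: srM srRb (Rb_R Rr) Rw.
- by move=> z [k [w [Rw ->]]]; apply: srM srRb (Hall k) Rw.
- by exists y; split => //; exists 0%N, 1; split; [exact: sr1 srRb | rewrite expr0 divr1 mulr1].
- move=> z [k [w [Rw ->]]]; exists k.+1, w; split => //.
  have := tXnz k; have := tnz; rewrite exprS => h1 h2; field.
  by rewrite h1 h2.
Qed.

Definition vp (y : K) (k : nat) : bool := ~~ `[< Rb (y / t ^+ k.+1) >].
Definition v (y : K) : nat :=
  match pselect (exists k, vp y k) with left H => ex_minn H | right _ => 0%N end.

Lemma down_div y i j : (i <= j)%N -> Rb (y / t ^+ j) -> Rb (y / t ^+ i).
Proof.
move=> /subnK <- H.
have -> : y / t ^+ i = y / t ^+ (j - i + i) * t ^+ (j - i).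
  have := tXnz i; have := tXnz (j - i); rewrite exprD => h1 h2; field.
  by rewrite h1 h2.
by apply: srM srRb H (srX _ srRb Rbt).
Qed.

Lemma vE y k : Rb y -> y != 0 -> Rb (y / t ^+ k) <-> (k <= v y)%N.
Proof.
move=> Ry ynz.
have ex : exists k, vp y k.
  case: (fin_div Ry ynz) => [[|j] Hj]; first by exfalso; apply: Hj; rewrite expr0 divr1.
  by exists j; apply/asboolPn.
rewrite /v; case: pselect => [H|]; last by [].
case: ex_minnP => mn Hmn Hmin.
split.
- move=> Hk; rewrite leqNgt; apply/negP => lt.
  by move/asboolPn: Hmn; apply; apply: down_div lt Hk.
- case: k => [|k] le; first by rewrite expr0 divr1.
  have : ~~ vp y k by apply/negP => h; have := Hmin _ h; rewrite leqNgt le.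
  by rewrite /vp negbK => /asboolP.
Qed.

Lemma v_div y : Rb y -> y != 0 -> Rb (y / t ^+ v y).
Proof. by move=> Ry ynz; apply/(vE _ Ry ynz). Qed.

Lemma v_unit y : Rb y -> y != 0 -> unitIn Rb (y / t ^+ v y).
Proof.
move=> Ry ynz; apply: notmax_unit (v_div Ry ynz) _ => /nbE [u [Ru E]].
have : Rb (y / t ^+ (v y).+1).
  have -> : y / t ^+ (v y).+1 = u.
    apply: (mulfI tnz); rewrite -E; have := tXnz (v y); have := tnz; rewrite exprS => h1 h2.
    by move: (t ^+ v y) h2 => p hp; field; rewrite h1 hp.
  done.
by move/(vE _ Ry ynz); rewrite ltnn.
Qed.

Lemma unit_nz u : unitIn Rb u -> u != 0. Proof. by case. Qed.
Lemma unit_Rb u : unitIn Rb u -> Rb u. Proof. by case. Qed.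
Lemma unitM u w : unitIn Rb u -> unitIn Rb w -> unitIn Rb (u * w).
Proof.
case=> Ru unz Rui [Rw wnz Rwi]; split; [exact: srM srRb Ru Rw | exact: mulf_neq0 | ].
by rewrite invfM; apply: srM srRb Rui Rwi.
Qed.
Lemma unitV u : unitIn Rb u -> unitIn Rb u^-1.
Proof. by case=> Ru unz Rui; split; rewrite ?invrK // invr_eq0. Qed.

Lemma v_eq y k u : unitIn Rb u -> y = t ^+ k * u -> v y = k.
Proof.
move=> uu E.
have Ry : Rb y by rewrite E; apply: srM srRb (srX _ srRb Rbt) (unit_Rb uu).
have ynz : y != 0 by rewrite E; apply: mulf_neq0; [exact: tXnz | exact: unit_nz].
apply/eqP; rewrite eqn_leq; apply/andP; split; last first.
  apply/(vE _ Ry ynz); rewrite E.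
  have -> : t ^+ k * u / t ^+ k = u by have := tXnz k => h; field.
  exact: unit_Rb.
rewrite leqNgt; apply/negP => /(vE _ Ry ynz) H.
apply: t_inv_notRb.
have -> : t^-1 = u^-1 * (y / t ^+ k.+1).
  rewrite E; have := tXnz k; have := tnz; have := unit_nz uu; rewrite exprS => h1 h2 h3.
  by field; rewrite h1 h2 h3.
by apply: srM srRb (unit_Rb (unitV uu)) H.
Qed.

Lemma v_decomp y : Rb y -> y != 0 -> exists u, unitIn Rb u /\ y = t ^+ v y * u.
Proof.
move=> Ry ynz; exists (y / t ^+ v y); split; first exact: v_unit.
by rewrite mulrC divfK //; exact: tXnz.
Qed.

Lemma vM y z : Rb y -> y != 0 -> Rb z -> z != 0 -> v (y * z) = (v y + v z)%N.
Proof.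
move=> Ry ynz Rz znz; case: (v_decomp Ry ynz) => u [uu Ey]; case: (v_decomp Rz znz) => w [uw Ez].
apply: (v_eq (unitM uu uw)); rewrite {1}Ey {1}Ez exprD.
by move: (t ^+ v y) (t ^+ v z) => p q; ring.
Qed.

Lemma v_unit0 u : unitIn Rb u -> v u = 0%N.
Proof. by move=> uu; apply: (v_eq uu); rewrite expr0 mul1r. Qed.

Lemma v_t : v t = 1%N.
Proof. by apply: (v_eq (unit1 srRb)); rewrite expr1 mulr1. Qed.

Lemma v_dvd y z : Rb y -> y != 0 -> Rb z -> z != 0 -> Rb (z / y) <-> (v y <= v z)%N.
Proof.
move=> Ry ynz Rz znz; split.
- move=> H; have qnz : z / y != 0 by apply: mulf_neq0; rewrite ?invr_eq0.
  have -> : z = y * (z / y) by field.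
  by rewrite vM // leq_addr.
- move/(vE _ Rz znz) => H.
  have -> : z / y = (z / t ^+ v y) * (y / t ^+ v y)^-1.
    by rewrite invf_div mulrA divfK //; exact: tXnz.
  by apply: srM srRb H (unit_Rb (unitV (v_unit Ry ynz))).
Qed.

Definition T (k : nat) : kset K := fun z => exists w, Rb w /\ z = t ^+ k * w.

Lemma TE k z : Rb z -> z != 0 -> T k z <-> (k <= v z)%N.
Proof.
move=> Rz znz; rewrite -(vE _ Rz znz); split.
- case=> w [Rw ->]; have := tXnz k => h.
  by have -> : t ^+ k * w / t ^+ k = w by field.
- by move=> H; exists (z / t ^+ k); split => //; have := tXnz k => h; field.
Qed.

Lemma T_Rb k z : T k z -> Rb z.
Proof. by case=> w [Rw ->]; apply: srM srRb (srX _ srRb Rbt) Rw. Qed.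

Lemma T_submod k : submod Rb (T k).
Proof.
split.
- by exists 0; split; [exact: sr0 srRb | rewrite mulr0].
- move=> x y [w1 [R1 ->]] [w2 [R2 ->]]; exists (w1 + w2); split; last by rewrite mulrDr.
  exact: srD srRb R1 R2.
- move=> a x Ra [w [Rw ->]]; exists (a * w); split; last by rewrite mulrCA.
  exact: srM srRb Ra Rw.
Qed.

Lemma T_mono j k : (j <= k)%N -> incl (T k) (T j).
Proof.
move=> /subnK <- z [w [Rw ->]]; exists (t ^+ (k - j) * w); split.
  exact: srM srRb (srX _ srRb Rbt) Rw.
by rewrite exprD; ring.
Qed.

Lemma T_mul j k y z : T j y -> T k z -> T (j + k) (y * z).
Proof.
case=> w1 [R1 ->] [w2 [R2 ->]]; exists (w1 * w2); split; first exact: srM srRb R1 R2.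
by rewrite exprD; ring.
Qed.

Lemma nb_T1 z : nb z <-> T 1 z.
Proof.
split; first by case/nbE => u [Ru ->]; exists u; rewrite expr1.
by case=> w [Rw ->]; rewrite expr1; apply: tmul_nb.
Qed.

Lemma approx y z : Rb y -> y != 0 -> Rb z -> z != 0 -> v y = v z ->
  exists r, R r /\ T (v y).+1 (y - r * z).
Proof.
move=> Ry ynz Rz znz Evy.
have Rw : Rb (y / z) by apply/v_dvd => //; rewrite Evy.
case: (hres Rw) => r [Rr /nbE [s [Rs Es]]].
case: (v_decomp Rz znz) => u [uu Ez].
exists r; split => //; exists (s * u); split; first exact: srM srRb Rs (unit_Rb uu).
have -> : y - r * z = (y / z - r) * z by field.
rewrite Es [in LHS]Ez Evy exprS.
by move: (t ^+ v z) => p; ring.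
Qed.

Lemma v_add_eq y b : Rb y -> y != 0 -> T (v y).+1 b -> y + b != 0 /\ v (y + b) = v y.
Proof.
move=> Ry ynz [w [Rw ->]]; case: (v_decomp Ry ynz) => u [uu Ey].
have uu' : unitIn Rb (u + t * w).
  apply: notmax_unit; first by apply: srD srRb (unit_Rb uu) (srM srRb Rbt Rw).
  move=> H; apply: (unit_not_maxid uu).
  have -> : u = (u + t * w) - t * w by rewrite addrK.
  by apply: maxidB srRb hlocb H (tmul_nb Rw).
have E : y + t ^+ (v y).+1 * w = t ^+ v y * (u + t * w).
  by rewrite {1}Ey exprS; move: (t ^+ v y) => p; ring.
split; last by apply: (v_eq uu'); rewrite E.
by rewrite E; apply: mulf_neq0; [exact: tXnz | exact: unit_nz].
Qed.

Definition VS (L : nat) (M : kset K) : {set 'I_L} :=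
  [set i : 'I_L | `[< exists y, M y /\ y != 0 /\ v y = i >]].

Lemma VSP L M (i : 'I_L) : i \in VS L M <-> exists y, M y /\ y != 0 /\ v y = i.
Proof. by rewrite inE; split => /asboolP. Qed.

Lemma VS_incl L M M' : incl M M' -> VS L M \subset VS L M'.
Proof.
move=> H; apply/subsetP => i /VSP [y [My [ynz vy]]]; apply/VSP; exists y; split => //.
exact: H.
Qed.

Lemma VS_seteq L M M' : seteq M M' -> VS L M = VS L M'.
Proof.
move=> H; apply/eqP; rewrite eqEsubset; apply/andP; split; apply: VS_incl => x; by case: (H x).
Qed.

Lemma T_all k y : Rb y -> y != 0 -> (k <= v y)%N -> T k y.
Proof. by move=> Ry ynz le; apply/(TE _ Ry ynz). Qed.

Lemma sub_by_vals L (P P' : kset K) : submod R P -> submod R P' -> incl P P' ->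
  incl P' Rb -> incl (T L) P -> VS L P' \subset VS L P -> incl P' P.
Proof.
move=> sP sP' PP' P'Rb TP HVS.
have claim : forall k y, P' y -> T (L - k) y -> P y.
  elim=> [|k IH] y P'y Ty; first by apply: TP; rewrite subn0 in Ty.
  have [->|ynz] := eqVneq y 0; first exact: sm0 sP.
  have Ry := P'Rb _ P'y.
  have [le|lt] := leqP (L - k) (v y); first by apply: IH => //; apply: T_all.
  have vyL : (v y < L)%N by apply: leq_trans lt (leq_subr _ _).
  have : Ordinal vyL \in VS L P by apply: (subsetP HVS); apply/VSP; exists y.
  case/VSP => z [Pz [znz vz]]; move: vz => /= vz.
  have Rz := P'Rb _ (PP' _ Pz).
  case: (approx Ry ynz Rz znz (esym vz)) => r [Rr Tr].
  have Py : P (y - r * z).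
    apply: IH; first by apply: (smB sR sP') P'y (PP' _ (smM sP Rr Pz)).
    apply: T_mono Tr.
    have : (L - k.+1 <= v y)%N by apply/(TE _ Ry ynz).
    by move: lt; rewrite subnS; case: (L - k)%N => //= n; rewrite ltnS => a b; rewrite ltnS.
  have -> : y = (y - r * z) + r * z by rewrite subrK.
  exact: smD sP Py (smM sP Rr Pz).
move=> y P'y; apply: (claim L); rewrite ?subnn //.
by exists y; split; [exact: P'Rb | rewrite expr0 mul1r].
Qed.

Lemma chain_mono (A : kset K) C k N M : strict_chain A C k N M ->
  forall i j, (i <= j)%N -> (j <= k)%N -> incl (C i) (C j).
Proof.
case=> _ _ _ Hs i j /subnK <-; elim: (j - i)%N => [|l IH] le y Cy; first by rewrite add0n.
rewrite addSn in le *; apply: (Hs _ le).1; apply: IH => //; exact: ltnW.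
Qed.

Lemma chain_bound L (A : kset K) C k N M : incl R A -> strict_chain A C k N M ->
  incl M Rb -> incl (T L) N -> (k <= #|VS L M :\: VS L N|)%N.
Proof.
move=> RA sc MRb TN; have mono := chain_mono sc; case: sc => sC E0 Ek Hs.
have CRb : forall i, (i <= k)%N -> incl (C i) Rb.
  by move=> i le y /(mono _ _ le (leqnn k)) /Ek /MRb.
have TC : forall i, (i <= k)%N -> incl (T L) (C i).
  by move=> i le y /TN /E0 /(mono _ _ (leq0n i) le).
have key : forall i, (i <= k)%N -> (#|VS L N| + i <= #|VS L (C i)|)%N.
  elim=> [|i IH] le; first by rewrite addn0 (VS_seteq _ E0).
  have lt : (i < k)%N by exact: le.
  rewrite addnS; apply: leq_ltn_trans (IH (ltnW le)) _; apply: proper_card.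
  rewrite properEneq VS_incl ?andbT; last exact: (Hs _ lt).1.
  apply/negP => /eqP EV; apply: (Hs _ lt).2.
  apply: (sub_by_vals (L := L)).
  - exact: sm_sub RA (sC _ (ltnW le)).
  - exact: sm_sub RA (sC _ le).
  - exact: (Hs _ lt).1.
  - exact: CRb.
  - exact: TC (ltnW le).
  - by rewrite EV.
have H := key _ (leqnn k); rewrite (VS_seteq _ Ek) in H.
have sub : VS L N \subset VS L M.
  by apply: VS_incl => y /E0 /(mono _ _ (leq0n k) (leqnn k)) /Ek.
rewrite cardsD (setIidPr sub).
by rewrite leq_subRL ?subset_leq_card // addnC.
Qed.

Definition Psum (N P : kset K) (i : nat) : kset K :=
  fun y => exists a b, N a /\ (P b /\ T i b) /\ y = a + b.

Lemma chain_exists L (A : kset K) N : subring A -> incl R A -> incl A Rb -> submod A N ->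
  incl (T L) N -> forall c P, submod A P -> incl N P -> incl P Rb ->
  #|VS L P :\: VS L N| = c -> exists C, strict_chain A C c N P.
Proof.
move=> sA RA ARb sN TN; elim=> [|c IH] P sP NP PRb Hc.
  have PN : incl P N.
    apply: (sub_by_vals (L := L)) => //.
    - exact: sm_sub RA sN.
    - exact: sm_sub RA sP.
    - by rewrite -setD_eq0 -cards_eq0 Hc.
  exists (fun _ => N); split => // x; split => //; [exact: NP | exact: PN].
set D := VS L P :\: VS L N.
have : (0 < #|D|)%N by rewrite Hc.
case/card_gt0P => i0 i0D.
case: (arg_minnP (fun j : 'I_L => j : nat) i0D) => i iD0 imin.
have iD : i \in D := iD0.
have [nNi Pi] : i \notin VS L N /\ i \in VS L P by move: iD; rewrite /D in_setD => /andP [].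
pose P' := Psum N P i.+1.
have sP' : submod A P'.
  split.
  - exists 0, 0; split; first exact: sm0 sN.
    by split; [split; [exact: sm0 sP | exact: sm0 (T_submod _)] | rewrite addr0].
  - move=> x y [a1 [b1 [Na1 [[Pb1 Tb1] ->]]]] [a2 [b2 [Na2 [[Pb2 Tb2] ->]]]].
    exists (a1 + a2), (b1 + b2); split; first exact: smD sN Na1 Na2.
    split; last by rewrite addrACA.
    by split; [exact: smD sP Pb1 Pb2 | exact: smD (T_submod _) Tb1 Tb2].
  - move=> r x Ar [a [b [Na [[Pb Tb] ->]]]].
    exists (r * a), (r * b); split; first exact: smM sN Ar Na.
    split; last by rewrite mulrDr.
    by split; [exact: smM sP Ar Pb | exact: smM (T_submod _) (ARb _ Ar) Tb].
have NP' : incl N P'.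
  move=> y Ny; exists y, 0; split => //; split; last by rewrite addr0.
  by split; [exact: sm0 sP | exact: sm0 (T_submod _)].
have P'P : incl P' P by move=> y [a [b [Na [[Pb _] ->]]]]; apply: smD sP (NP _ Na) Pb.
have P'Rb : incl P' Rb by move=> y /P'P /PRb.
have EVS : VS L P' :\: VS L N = D :\ i.
  apply/eqP; rewrite eqEsubset; apply/andP; split; apply/subsetP => j.
  - rewrite in_setD => /andP [nNj P'j].
    rewrite in_setD1 /D in_setD nNj (subsetP (VS_incl _ P'P) _ P'j) /= andbT.
    apply/negP => /eqP ji; move: P'j; rewrite ji => /VSP [y [[a [b [Na [[Pb Tb] Ey]]]] [ynz vy]]].
    have Ry : Rb y by apply: P'Rb; exists a, b.
    have Tb' : T (v y).+1 (- b) by rewrite vy; apply: smN srRb (T_submod _) Tb.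
    case: (v_add_eq Ry ynz Tb') => anz va.
    move/negP: nNj; apply; apply/VSP; exists a; split; last split.
    + done.
    + by move: anz; rewrite Ey addrK.
    + by rewrite ji; move: va; rewrite vy Ey addrK.
  - rewrite in_setD1 /D in_setD => /andP [ji /andP [nNj Pj]]; rewrite in_setD nNj /=.
    have ij : (i < j)%N.
      have jD : j \in D by rewrite /D in_setD nNj Pj.
      rewrite ltn_neqAle (imin _ jD).
      by rewrite andbT; apply/negP => /eqP /val_inj E; move/negP: ji; apply; rewrite E.
    case/VSP: Pj => y [Py [ynz vy]]; apply/VSP; exists y; split => //.
    exists 0, y; split; first exact: sm0 sN.
    split; last by rewrite add0r.
    split => //; apply: T_all => //; [exact: PRb | by rewrite vy].
have iP' : i \notin VS L P'.
  apply/negP => iP'; have : i \in VS L P' :\: VS L N.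
    by rewrite in_setD iP' andbT.
  by rewrite EVS in_setD1 eqxx.
have Hc' : #|VS L P' :\: VS L N| = c.
  by move: Hc; rewrite (cardsD1 i D) iD EVS add1n => [[]].
case: (IH P' sP' NP' P'Rb Hc') => C [sC E0 Ec Hs].
exists (fun j => if (j <= c)%N then C j else P); split.
- by move=> j _; case: ifP => jc; [exact: sC | exact: sP].
- by rewrite leq0n.
- by rewrite ltnn.
- move=> j; rewrite ltnS => jc; rewrite jc.
  case: (ltnP j c) => jc'.
    exact: Hs.
  have -> : j = c by apply/eqP; rewrite eqn_leq jc jc'.
  split; first by move=> y /Ec /P'P.
  move=> H; move/negP: iP'; apply; apply: (subsetP (VS_incl _ (fun y Py => (Ec y).1 (H y Py)))).
  done.
Qed.

Lemma length_thm L (A N M : kset K) : subring A -> incl R A -> incl A Rb ->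
  submod A N -> submod A M -> incl N M -> incl M Rb -> incl (T L) N ->
  has_length A N M #|VS L M :\: VS L N|.
Proof.
move=> sA RA ARb sN sM NM MRb TN; split => //.
- exact: (chain_exists sA RA ARb sN TN).
- by move=> C k sc; apply: (chain_bound RA sc).
Qed.

Hypothesis hnd : ~ is_DVR R.

Local Notation S := (colon m m).
Local Notation c := (colon R Rb).
Local Notation cS := (colon S (intclos S)).

Lemma ideal_m : ideal R m. Proof. exact: ideal_maxid sR hloc. Qed.
Lemma sm_m : submod R m. Proof. by case: ideal_m. Qed.
Lemma m_R y : m y -> R y. Proof. by case. Qed.
Lemma m_Rb y : m y -> Rb y. Proof. by move/m_nb => []. Qed.
Lemma m_nonzero : exists x, m x /\ x != 0. Proof. by case: hdim => [[x H] _]; exists x. Qed.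

Lemma S_Rb : incl S Rb.
Proof.
move=> s Ss; case: m_nonzero => x [mx xnz].
by apply: (@det_mod m) => //; [exact: sm_m | exact: m_Rb | exists x].
Qed.

Lemma sS : subring S.
Proof.
split.
- by move=> y my; rewrite mul1r.
- by move=> a b Sa Sb y my; rewrite mulrBl; apply: maxidB sR hloc (Sa _ my) (Sb _ my).
- by move=> a b Sa Sb y my; rewrite -mulrA; apply: Sa; apply: Sb.
Qed.

Lemma R_S : incl R S. Proof. by move=> r Rr y my; apply: maxid_mul sR Rr my. Qed.

Lemma intclosS z : intclos S z <-> Rb z.
Proof.
split.
- by case=> p [mp Sc rp]; apply: (Rb_closed mp) rp => i; apply: S_Rb.
- by case=> p [mp Rc rp]; exists p; split => // i; apply: R_S.
Qed.

Lemma cSE z : cS z <-> (forall y, Rb y -> S (z * y)).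
Proof. by split => H y Hy; apply: H; apply/intclosS. Qed.

Lemma Rb_sub_R_DVR : incl Rb R -> is_DVR R.
Proof.
move=> RbR; split => //; first by case: hdim => [[x H] _]; exists x.
move=> I [sI IR].
case: (pselect (exists y, I y /\ y != 0)) => [ex|nex]; last first.
  exists 0; split; first exact: sr0 sR.
  move=> y; split.
  - move=> Iy; exists 0; split; first exact: sr0 sR.
    rewrite mul0r; apply: contrapT => ynz; apply: nex; exists y; split => //.
    by apply/eqP.
  - by case=> r [Rr ->]; rewrite mulr0; exact: sm0 sI.
have ex' : exists k, `[< exists y, I y /\ y != 0 /\ v y = k >].
  by case: ex => y [Iy ynz]; exists (v y); apply: asboolT; exists y.
case: (ex_minnP ex') => k /asboolP [g [Ig [gnz vg]]] kmin.
exists g; split; first exact: IR.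
move=> y; split.
- move=> Iy; have [->|ynz] := eqVneq y 0.
    by exists 0; split; [exact: sr0 sR | rewrite mul0r].
  exists (y / g); split; last by rewrite divfK.
  apply: RbR; apply/v_dvd => //; [exact: Rb_R (IR _ Ig) | exact: Rb_R (IR _ Iy) | ].
  by rewrite vg; apply: kmin; apply: asboolT; exists y.
- by case=> r [Rr ->]; exact: smM sI Rr Ig.
Qed.

Lemma c_Rb w : c w -> Rb w.
Proof. by move=> cw; apply: Rb_R; rewrite -[w]mulr1; apply: cw; apply: sr1 srRb. Qed.
Lemma c_R w : c w -> R w.
Proof. by move=> cw; rewrite -[w]mulr1; apply: cw; apply: sr1 srRb. Qed.

Lemma c_nb w : c w -> nb w.
Proof.
move=> cw; have Rbw := c_Rb cw.
apply: contrapT => H; have uw := notmax_unit Rbw H.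
apply: hnd; apply: Rb_sub_R_DVR => z Rz.
have wnz : w != 0 by case: uw.
have -> : z = w * (w^-1 * z) by field.
by apply: cw; apply: srM srRb _ Rz; case: uw.
Qed.

Lemma c_m w : c w -> m w. Proof. by move=> cw; apply: nb_m (c_R cw) (c_nb cw). Qed.

Lemma c_mul w y : c w -> Rb y -> c (w * y).
Proof. by move=> cw Ry z Rz; rewrite -mulrA; apply: cw; apply: srM srRb Ry Rz. Qed.

Lemma sub_c : submod R c.
Proof.
split.
- by move=> y _; rewrite mul0r; exact: sr0 sR.
- by move=> a b ca cb y Ry; rewrite mulrDl; apply: srD sR (ca _ Ry) (cb _ Ry).
- by move=> r a Rr ca y Ry; rewrite -mulrA; apply: srM sR Rr (ca _ Ry).
Qed.

Lemma c_S : incl c S.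
Proof.
move=> w cw y my; apply: nb_m; first by apply: cw; exact: m_Rb.
by rewrite mulrC; apply: maxid_mul srRb (m_Rb my) (c_nb cw).
Qed.

Lemma c_cS : incl c cS.
Proof. by move=> w cw; apply/cSE => y Ry; apply: c_S; apply: c_mul. Qed.

Lemma cS_S : incl cS S.
Proof. by move=> z /cSE H; rewrite -[z]mulr1; apply: H; exact: sr1 srRb. Qed.

Lemma sub_cS : submod S cS.
Proof.
split.
- by apply/cSE => y _; rewrite mul0r; exact: sr0 sS.
- move=> a b /cSE ca /cSE cb; apply/cSE => y Ry; rewrite mulrDl.
  exact: srD sS (ca _ Ry) (cb _ Ry).
- move=> s a Ss /cSE ca; apply/cSE => y Ry; rewrite -mulrA; exact: srM sS Ss (ca _ Ry).
Qed.

Lemma T_c : incl (T (v d)) c.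
Proof.
move=> z [w [Rw ->]] y Ry.
case: (v_decomp (Rb_R Rd) dnz) => u [uu Ed].
have unz : u != 0 by case: uu.
have E : t ^+ v d = d / u by rewrite {2}Ed mulfK.
rewrite E; have -> : d / u * w * y = d * (u^-1 * w * y) by ring.
apply: dRb; apply: srM srRb _ Ry; apply: srM srRb _ Rw; by case: uu.
Qed.

Local Notation L := (v d).+1.

Lemma TL_c : incl (T L) c.
Proof. by move=> z /(T_mono (leqnSn _)) /T_c. Qed.

Definition goodx x := [/\ m x, x != 0 & forall y, m y -> Rb (y / x)].

Lemma good_ex : exists x, goodx x.
Proof.
have ex' : exists k, `[< exists y, m y /\ y != 0 /\ v y = k >].
  by case: m_nonzero => y [my ynz]; exists (v y); apply: asboolT; exists y.
case: (ex_minnP ex') => k /asboolP [x [mx [xnz vx]]] kmin.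
exists x; split => // y my; have [->|ynz] := eqVneq y 0; first by rewrite mul0r; exact: sr0 srRb.
apply/v_dvd => //; [exact: m_Rb | exact: m_Rb | ].
by rewrite vx; apply: kmin; apply: asboolT; exists y.
Qed.

Lemma good_T x y : goodx x -> m y -> T (v x) y.
Proof.
case=> mx xnz H my; have [->|ynz] := eqVneq y 0; first exact: sm0 (T_submod _).
by apply: T_all => //; [exact: m_Rb | apply/v_dvd => //; [exact: m_Rb | exact: m_Rb | exact: H]].
Qed.

Lemma good_v1 x : goodx x -> (1 <= v x)%N.
Proof.
case=> mx xnz _; apply/(TE _ (m_Rb mx) xnz); apply/nb_T1; exact: m_nb.
Qed.

Lemma good_cS x w : goodx x -> c w -> cS (w / x).
Proof.
case=> mx xnz H cw; apply/cSE => y Ry z mz.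
have -> : w / x * y * z = w * (y * (z / x)) by field.
have Ryz : Rb (y * (z / x)) by apply: srM srRb Ry (H _ mz).
apply: nb_m; first exact: cw.
by rewrite mulrC; apply: maxid_mul srRb Ryz (c_nb cw).
Qed.

Definition Aset := VS L S :\: VS L cS.
Definition Bset := VS L R :\: VS L c.
Definition fx (x : K) (i : 'I_L) : 'I_L := inord (i + v x).

Lemma ord0_B : (ord0 : 'I_L) \in Bset.
Proof.
rewrite in_setD; apply/andP; split.
- apply/negP => /VSP [w [cw [wnz vw]]].
  by have := c_nb cw => /nb_T1 /(TE _ (c_Rb cw) wnz); rewrite vw.
- apply/VSP; exists 1; split; first exact: sr1 sR.
  by split; [exact: oner_neq0 | exact: v_unit0 (unit1 srRb)].
Qed.

Lemma fx_prop x i : goodx x -> i \in Aset ->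
  [/\ (i + v x < L)%N, val (fx x i) = (i + v x)%N & fx x i \in Bset :\ ord0].
Proof.
move=> gx; rewrite in_setD => /andP [ncS /VSP [s [Ss [snz vs]]]].
case: (gx) => mx xnz _.
have Rbs := S_Rb Ss.
have mxs : m (s * x) := Ss _ mx.
have xsnz : s * x != 0 := mulf_neq0 snz xnz.
have vxs : v (s * x) = (i + v x)%N by rewrite vM // ?vs //; exact: m_Rb.
have lt : (i + v x < L)%N.
  rewrite ltnNge; apply/negP => le.
  have cxs : c (s * x) by apply: TL_c; apply: T_all => //; [exact: m_Rb | by rewrite vxs].
  move/negP: ncS; apply; apply/VSP; exists s; split => //.
  by have := good_cS gx cxs; rewrite mulfK.
have vf : val (fx x i) = (i + v x)%N by rewrite /fx /= inordK.
split => //.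
rewrite in_setD1 in_setD; apply/and3P; split.
- apply/eqP => /(congr1 val); rewrite vf /= => /eqP; rewrite addn_eq0 => /andP [_ /eqP vx0].
  by have := good_v1 gx; rewrite vx0.
- apply/negP => /VSP [w [cw [wnz vw]]].
  move/negP: ncS; apply; apply/VSP; exists (w / x); split; first exact: good_cS.
  have Rwx : Rb (w / x).
    by apply/v_dvd => //; [exact: m_Rb | exact: c_Rb | rewrite vw vf; exact: leq_addl].
  have wxnz : w / x != 0 by apply: mulf_neq0; rewrite ?invr_eq0.
  split => //.
  have E : w = x * (w / x) by field.
  have := vM (m_Rb mx) xnz Rwx wxnz; rewrite -E vw vf addnC => /eqP.
  by rewrite eqn_add2l => /eqP ->.
- by apply/VSP; exists (s * x); split; [exact: m_R | split => //; rewrite vxs vf].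
Qed.

Lemma fx_card x : goodx x -> #|fx x @: Aset| = #|Aset| /\ fx x @: Aset \subset Bset :\ ord0.
Proof.
move=> gx; split.
- apply: card_in_imset => i j iA jA E.
  case: (fx_prop gx iA) => _ vi _; case: (fx_prop gx jA) => _ vj _.
  by apply/val_inj/eqP; rewrite -(eqn_add2r (v x)) -vi -vj E.
- by apply/subsetP => y /imsetP [i iA ->]; case: (fx_prop gx iA).
Qed.

Lemma B_card : #|Bset| = (#|Bset :\ ord0|).+1.
Proof. by rewrite (cardsD1 ord0 Bset) ord0_B. Qed.

Lemma a_lt_b : (#|Aset| < #|Bset|)%N.
Proof.
case: good_ex => x gx; case: (fx_card gx) => <- sub.
by rewrite B_card ltnS subset_leq_card.
Qed.

Lemma submod_self (A : kset K) : subring A -> submod A A.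
Proof. by move=> sA; split; [exact: sr0 | move=> x y; exact: srD | move=> a x; exact: srM]. Qed.

Definition Xm (x : K) : kset K := fun y => exists z, m z /\ y = z / x.

Lemma sub_Xm x : submod R (Xm x).
Proof.
split.
- by exists 0; split; [exact: maxid0 sR | rewrite mul0r].
- move=> a b [z1 [m1 ->]] [z2 [m2 ->]]; exists (z1 + z2); split; last by rewrite mulrDl.
  exact: hloc.
- move=> r a Rr [z [mz ->]]; exists (r * z); split; last by rewrite mulrA.
  exact: maxid_mul sR Rr mz.
Qed.

Lemma eq_imp_S x : goodx x -> #|Aset| = (#|Bset|).-1 -> forall z, m z -> S (z / x).
Proof.
move=> gx Hab; case: (gx) => mx xnz gH.
case: (fx_card gx) => cardf sub.
have EB : fx x @: Aset = Bset :\ ord0.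
  apply/eqP; rewrite eqEcard sub /= cardf Hab B_card /=; exact: leqnn.
have XmS : incl (Xm x) S.
  apply: (sub_by_vals (L := L)).
  - exact: sm_sub R_S (submod_self sS).
  - exact: sub_Xm.
  - by move=> s Ss; exists (s * x); split; [exact: Ss | rewrite mulfK].
  - by move=> y [z [mz ->]]; exact: gH.
  - by move=> y /TL_c; exact: c_S.
  apply/subsetP => k /VSP [y [[z [mz Ey]] [ynz vy]]].
  have znz : z != 0 by apply/eqP => z0; move: ynz; rewrite Ey z0 mul0r eqxx.
  have Ry : Rb y by rewrite Ey; exact: gH.
  have Ez : z = x * y by rewrite Ey; field.
  have vz : v z = (k + v x)%N.
    by rewrite Ez vM //; [rewrite vy addnC | exact: m_Rb].
  case: (leqP L (k + v x)) => h.
    have cz : c z by apply: TL_c; apply: T_all => //; [exact: m_Rb | rewrite vz].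
    apply/VSP; exists y; split => //; rewrite Ey; apply: cS_S; exact: good_cS.
  pose j : 'I_L := Ordinal h.
  case: (boolP (j \in VS L c)) => jc.
    case/VSP: jc => w [cw [wnz vw]].
    apply/VSP; exists (w / x); split; first by apply: cS_S; apply: good_cS.
    have Rwx : Rb (w / x).
      by apply/v_dvd => //; [exact: m_Rb | exact: c_Rb | rewrite vw /= leq_addl].
    have wxnz : w / x != 0 by apply: mulf_neq0; rewrite ?invr_eq0.
    split => //.
    have E : w = x * (w / x) by field.
    have := vM (m_Rb mx) xnz Rwx wxnz; rewrite -E vw /= addnC => /eqP.
    by rewrite eqn_add2l => /eqP ->.
  have jB : j \in Bset :\ ord0.
    rewrite in_setD1 in_setD jc /=; apply/andP; split.
      apply/eqP => /(congr1 val) /= /eqP; rewrite addn_eq0 => /andP [_ /eqP vx0].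
      by have := good_v1 gx; rewrite vx0.
    by apply/VSP; exists z; split; [exact: m_R | split].
  move: jB; rewrite -EB => /imsetP [i iA Eji].
  case: (fx_prop gx iA) => _ vi _.
  have ik : i = k.
    apply/val_inj/eqP; rewrite -(eqn_add2r (v x)) -vi -Eji /=; exact: eqxx.
  by move: iA; rewrite /Aset in_setD ik => /andP [].
by move=> z mz; apply: XmS; exists z.
Qed.

Lemma S_imp_eq x : goodx x -> (forall z, m z -> S (z / x)) -> #|Aset| = (#|Bset|).-1.
Proof.
move=> gx HS; case: (gx) => mx xnz gH.
case: (fx_card gx) => cardf sub.
suff EB : fx x @: Aset = Bset :\ ord0 by rewrite -cardf EB B_card.
apply/eqP; rewrite eqEsubset sub /=; apply/subsetP => j.
rewrite in_setD1 in_setD => /and3P [j0 jc /VSP [w [Rw [wnz vw]]]].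
have Rbw : Rb w := Rb_R Rw.
have vw1 : (1 <= v w)%N.
  by rewrite vw lt0n; apply/negP => /eqP E; move/negP: j0; apply; apply/eqP/val_inj.
have mw : m w by apply: nb_m Rw _; apply/nb_T1; apply: T_all.
set y := w / x.
have Sy : S y := HS _ mw.
have Ry : Rb y := gH _ mw.
have ynz : y != 0 by apply: mulf_neq0; rewrite ?invr_eq0.
have vwE : v w = (v y + v x)%N.
  have E : w = x * y by rewrite /y; field.
  by rewrite {1}E vM //; [exact: addnC | exact: m_Rb].
have yL : (v y < L)%N by apply: leq_ltn_trans (ltn_ord j); rewrite -vw vwE leq_addr.
pose i : 'I_L := Ordinal yL.
have iA : i \in Aset.
  rewrite /Aset in_setD; apply/andP; split.
  - apply/negP => /VSP [z [cSz [znz vz]]].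
    have cxz : c (x * z).
      move=> u Ru; rewrite -mulrA mulrC.
      have Szu := (cSE z).1 cSz u Ru.
      by apply: m_R; exact: Szu x mx.
    move/negP: jc; apply; apply/VSP; exists (x * z); split => //; split.
      by apply: mulf_neq0.
    have Rz : Rb z by apply: S_Rb; apply: cS_S.
    by rewrite vM //; [rewrite vz /= -vw vwE addnC | exact: m_Rb].
  - by apply/VSP; exists y.
apply/imsetP; exists i => //; apply/val_inj; rewrite /fx /= inordK; first by rewrite -vwE vw.
by rewrite -vwE vw.
Qed.

Lemma incl_refl (M : kset K) : incl M M. Proof. by []. Qed.

Lemma mulS_mono (M M' N N' : kset K) : incl M M' -> incl N N' -> incl (mulS M N) (mulS M' N').
Proof.
move=> HM HN y [s [Hs ->]]; exists s; split => // p ps.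
by case: (Hs p ps) => h1 h2; split; [exact: HM | exact: HN].
Qed.

Lemma mulS_ideal_R (I : kset K) : ideal R I -> seteq (mulS I R) I.
Proof.
move=> [sI IR] y; split.
- case=> s [Hs ->]; rewrite big_seq; apply: (@sm_sum _ _ _ _ _ (fun p => p \in s) (fun p : K * K => p.1 * p.2) sI) => p ps.
  by case: (Hs p ps) => Ip Rp; rewrite mulrC; exact: (smM sI Rp Ip).
- move=> Iy; exists [:: (y, 1)]; split; last by rewrite big_seq1 mulr1.
  by move=> p; rewrite inE => /eqP -> /=; split => //; exact: sr1 sR.
Qed.

Lemma vX x n : Rb x -> x != 0 -> v (x ^+ n) = (n * v x)%N.
Proof.
move=> Rx xnz; elim: n => [|n IH]; first by rewrite expr0 mul0n; exact: v_unit0 (unit1 srRb).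
rewrite exprS vM //; last by apply: expf_neq0.
- by rewrite IH mulSn.
- exact: srX _ srRb Rx.
Qed.

Lemma powS_T x n y : goodx x -> powS R m n y -> T (n * v x) y.
Proof.
move=> gx; elim: n y => [|n IH] y /=.
  by move=> Ry; exists y; split; [exact: Rb_R | rewrite mul0n expr0 mul1r].
case=> s [Hs ->]; rewrite big_seq; apply: sm_sum (T_submod _) _ => p ps.
case: (Hs p ps) => h1 h2; rewrite mulSn; apply: T_mul; [exact: good_T | exact: IH].
Qed.

Lemma pow_in x n : m x -> powS R m n (x ^+ n).
Proof.
move=> mx; elim: n => [|n IH] /=; first by rewrite expr0; exact: sr1 sR.
exists [:: (x, x ^+ n)]; split; last by rewrite big_seq1 exprS.
by move=> p; rewrite inE => /eqP -> /=.
Qed.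

Lemma principal_ideal x : R x -> ideal R (principal R x).
Proof.
move=> Rx; split.
- split.
  + by exists 0; split; [exact: sr0 sR | rewrite mul0r].
  + move=> a b [r1 [R1 ->]] [r2 [R2 ->]]; exists (r1 + r2); split; last by rewrite mulrDl.
    exact: srD sR R1 R2.
  + move=> a b Ra [r [Rr ->]]; exists (a * r); split; last by rewrite mulrA.
    exact: srM sR Ra Rr.
- by move=> y [r [Rr ->]]; apply: srM sR Rr Rx.
Qed.

Lemma principal_m x : m x -> incl (principal R x) m.
Proof. by move=> mx y [r [Rr ->]]; apply: maxid_mul sR Rr mx. Qed.

Lemma mm_of x : goodx x -> (forall z, m z -> S (z / x)) -> minimal_multiplicity R.
Proof.
move=> gx HS; case: (gx) => mx xnz gH.
have KEY : seteq (mulS m m) (mulS (principal R x) m).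
  move=> y; split.
  - case=> s [Hs ->].
    exists (map (fun p => (x, p.1 / x * p.2)) s); split.
      move=> p /mapP [q qs ->] /=; split; first by exists 1; split; [exact: sr1 sR | rewrite mul1r].
      by case: (Hs q qs) => h1 h2; apply: (HS _ h1).
    by rewrite big_map; apply: eq_bigr => p _ /=; field.
  - exact: mulS_mono (principal_m mx) (@incl_refl m) y.
have iP := principal_ideal (m_R mx).
have E1 := mulS_ideal_R ideal_m.
have E1l : incl (mulS m R) m by move=> z /E1.
have E1r : incl m (mulS m R) by move=> z /E1.
exists x; split; last exact: KEY.
split.
- split => //; first exact: principal_m.
  exists 1%N => y /=; split.
  + move/(mulS_mono (@incl_refl (principal R x)) E1l) => /(KEY y).2.
    by case=> s [Hs ->]; exists s; split => // p /Hs [h1 h2]; split => //; exact: E1r.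
  + move=> h; have h2 : mulS m m y by move: h; case=> s [Hs ->]; exists s; split => // p /Hs [h1 h2]; split => //; exact: E1l.
    move: h2 => /(KEY y).1.
    by case=> s [Hs ->]; exists s; split => // p /Hs [h1 h2]; split => //; exact: E1r.
- move=> J [iJ _ [n En]] JP y; split; first exact: JP.
  suff Jx : J x by case=> r [Rr ->]; case: iJ => sJ _; apply: smM sJ Rr Jx.
  apply: contrapT => nJx.
  have := (En (x ^+ n.+1)).2 (pow_in n.+1 mx); case=> s [Hs E].
  have : T (n.+1 * v x).+1 (x ^+ n.+1).
    rewrite E big_seq; apply: sm_sum (T_submod _) _ => p ps.
    case: (Hs p ps) => Jp Pp.
    case: (JP _ Jp) => r [Rr Ep].
    have mr : m r.
      split => // ur; apply: nJx; case: ur => _ rnz Rri.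
      have -> : x = r^-1 * p.1 by rewrite Ep; field.
      by case: iJ => sJ _; apply: smM sJ Rri Jp.
    have Tr : T 1 r by apply/nb_T1; exact: m_nb.
    have Tp1 : T (1 + v x) p.1 by rewrite Ep; apply: T_mul Tr (good_T gx mx).
    have := T_mul Tp1 (powS_T gx Pp).
    by apply: T_mono; rewrite mulSn add1n addSn.
  move/(TE _ (srX _ srRb (m_Rb mx)) (expf_neq0 _ xnz)).
  by rewrite vX ?ltnn //; exact: m_Rb.
Qed.

Lemma good_of_mm : minimal_multiplicity R -> exists x, goodx x /\ (forall z, m z -> S (z / x)).
Proof.
case=> q [[[iJ inclJ _] _] E].
have mq : m q by apply: inclJ; exists 1; split; [exact: sr1 sR | rewrite mul1r].
have prod_in : forall z y, m z -> m y -> mulS m m (z * y).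
  by move=> z y mz my; exists [:: (z, y)]; split; [move=> p; rewrite inE => /eqP -> | rewrite big_seq1].
have qnz : q != 0.
  apply/eqP => q0; case: m_nonzero => x0 [mx0 x0nz].
  case: ((E _).1 (prod_in _ _ mx0 mx0)) => s [Hs Es].
  move: (mulf_neq0 x0nz x0nz); rewrite Es big1_seq ?eqxx // => p /andP [_ ps].
  by case: (Hs p ps) => [[r [_ ->]] _]; rewrite q0 !mulr0 mul0r.
have HS : forall z, m z -> S (z / q).
  move=> z mz y my.
  case: ((E _).1 (prod_in _ _ mz my)) => s [Hs Es].
  have -> : z / q * y = (\sum_(p <- s) p.1 * p.2) / q by rewrite -Es; field.
  rewrite mulr_suml big_seq; apply: sm_sum sm_m _ => p ps.
  case: (Hs p ps) => [[r [Rr ->]] mp2].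
  have -> : r * q * p.2 / q = r * p.2 by field.
  exact: maxid_mul sR Rr mp2.
exists q; split => //; split => // y my; exact: S_Rb (HS _ my).
Qed.

Lemma main_sec : exists a b : nat,
    [/\ has_length S cS S a, has_length R c R b, (a < b)%N
      & a = b.-1 <-> minimal_multiplicity R].
Proof.
exists #|Aset|, #|Bset|; split.
- apply: (length_thm (L := L)) sS R_S S_Rb sub_cS (submod_self sS) cS_S S_Rb _.
  by move=> y /TL_c /c_cS.
- apply: (length_thm (L := L)) sR (fun y h => h) Rb_R sub_c (submod_self sR) c_R Rb_R TL_c.
- exact: a_lt_b.
- split.
  + move=> Hab; case: good_ex => x gx; exact: mm_of gx (eq_imp_S gx Hab).
  + by case/good_of_mm => x [gx HS]; apply: S_imp_eq gx HS.
Qed.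

End Main.

Theorem lemma6p8 (K : fieldType) (R : K -> Prop) :
  subring R -> frac_field_of R -> noetherian R -> local R -> dim_one R ->
  (* analytically irreducible: Rbar is a finite R-module and local *)
  fin_gen R (intclos R) -> local (intclos R) ->
  residue_iso R -> ~ is_DVR R ->
  let m := maxid R in
  let S := colon m m in
  let c := colon R (intclos R) in
  let cS := colon S (intclos S) in
  exists a b : nat,
    [/\ has_length S cS S a, has_length R c R b, (a < b)%N
      & a = b.-1 <-> minimal_multiplicity R].
Proof.
move=> sR hfrac hnoeth hloc hdim hfin hlocb hres hnd.
exact: (main_sec sR hfrac hnoeth hloc hdim hfin hlocb hres hnd).
Qed.
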